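(* Let $\mathcal D=\{(i_m,\mathbf X_m,S_m)\}_{m=1}^t$ with $S_m\subseteq[N]$ and features $\mathbf x_{mj}\in\mathbb R^d$, and let $\boldsymbol\theta^\star\in\mathbb R^d$. For any $\boldsymbol\theta\in\mathbb R^d$, with $\zeta_{\boldsymbol\theta}=3\sqrt2\max_{m\le t,j\in S_m}|\mathbf x_{mj}^\top(\boldsymbol\theta-\boldsymbol\theta^\star)|$ and $\varphi(\zeta)=\big(\frac{e^\zeta-1}\zeta-1\big)(1+\zeta)$, $$\frac1{1+2\varphi(\zeta_{\boldsymbol\theta})}\mathbf H(\boldsymbol\theta^\star)\preceq\mathbf H(\boldsymbol\theta)\preceq(1+2\varphi(\zeta_{\boldsymbol\theta}))\mathbf H(\boldsymbol\theta^\star).$$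
   Context: $q_{mj}(\boldsymbol\theta)=\exp(\mathbf x_{mj}^\top\boldsymbol\theta)/(1+\sum_{k\in S_m}\exp(\mathbf x_{mk}^\top\boldsymbol\theta))$ for $j\in S_m$. $\mathbf H(\boldsymbol\theta)=\sum_{m=1}^t\Big(\sum_{j\in S_m}q_{mj}(\boldsymbol\theta)\mathbf x_{mj}\mathbf x_{mj}^\top-\sum_{i\in S_m}\sum_{j\in S_m}q_{mi}(\boldsymbol\theta)q_{mj}(\boldsymbol\theta)\mathbf x_{mi}\mathbf x_{mj}^\top\Big)$, the Hessian of the MNL negative log-likelihood of $\mathcal D$. $\varphi(0)$ is understood as its limit $0$. *)

(* Defs.v *)
From HB Require Import structures.
From mathcomp Require Import all_boot all_order all_algebra.
From mathcomp Require Import reals.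
From mathcomp.analysis Require Import sequences exp.
Set Implicit Arguments. Unset Strict Implicit. Unset Printing Implicit Defensive.
Import Order.TTheory GRing.Theory Num.Theory.
Local Open Scope ring_scope.

Section MNL.
Variables (R : realType) (t N d : nat).

Definition inner (u v : 'cV[R]_d) : R := (trmx u *m v) 0 0.

Definition mnl_q (S : 'I_t -> {set 'I_N}) (x : 'I_t -> 'I_N -> 'cV[R]_d)
  (theta : 'cV[R]_d) (m : 'I_t) (j : 'I_N) : R :=
  expR (inner (x m j) theta) /
  (1 + \sum_(k in S m) expR (inner (x m k) theta)).

Definition mnl_H (S : 'I_t -> {set 'I_N}) (x : 'I_t -> 'I_N -> 'cV[R]_d)
  (theta : 'cV[R]_d) : 'M[R]_d :=
  \sum_(m < t)
    (\sum_(j in S m) mnl_q S x theta m j *: (x m j *m trmx (x m j))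
     - \sum_(i in S m) \sum_(j in S m)
         (mnl_q S x theta m i * mnl_q S x theta m j) *: (x m i *m trmx (x m j))).

Definition mnl_zeta (S : 'I_t -> {set 'I_N}) (x : 'I_t -> 'I_N -> 'cV[R]_d)
  (theta thetas : 'cV[R]_d) : R :=
  3 * Num.sqrt 2 *
  \big[Num.max/0]_(m < t) \big[Num.max/0]_(j in S m)
      `|inner (x m j) (theta - thetas)|.
End MNL.

(* phi(z) = ((e^z - 1)/z - 1)(1 + z), with phi(0) := 0 (its limit). *)
Definition phi {R : realType} (z : R) : R :=
  if z == 0 then 0 else ((expR z - 1) / z - 1) * (1 + z).

Definition loewner_le {R : realType} {d : nat} (A B : 'M[R]_d) : Prop :=
  forall v : 'cV[R]_d, 0 <= (trmx v *m (B - A) *m v) 0 0.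

(* Main.v *)
Require Import Defs.
From HB Require Import structures.
From mathcomp Require Import all_boot all_order all_algebra.
From mathcomp Require Import reals.
From mathcomp.analysis Require Import sequences exp.
From mathcomp Require Import lra ring.
Import Order.TTheory GRing.Theory Num.Theory.
Local Open Scope ring_scope.
Section Var.
Variables (R : realType) (I : finType) (P : pred I).

Lemma var_ident (w a : I -> R) (w0 mu : R) :
  w0 + \sum_(j | P j) w j = 1 ->
  \sum_(j | P j) w j * (a j - mu) ^+ 2 + w0 * mu ^+ 2 =
  \sum_(j | P j) w j * a j ^+ 2 - 2 * mu * (\sum_(j | P j) w j * a j) + mu ^+ 2.
Proof.
move=> hw.
have -> : \sum_(j | P j) w j * (a j - mu) ^+ 2 =
  \sum_(j | P j) (w j * a j ^+ 2 - (2 * mu) * (w j * a j) + mu ^+ 2 * w j).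
  by apply: eq_bigr => j _; ring.
rewrite big_split sumrB /= -!mulr_sumr.
have -> : \sum_(j | P j) w j = 1 - w0 by rewrite -hw; ring.
ring.
Qed.

Lemma var_cmp (q q' a : I -> R) (q0 q0' K : R) :
  q0 + \sum_(j | P j) q j = 1 -> q0' + \sum_(j | P j) q' j = 1 ->
  (forall j, P j -> q' j <= K * q j) -> q0' <= K * q0 ->
  \sum_(j | P j) q' j * a j ^+ 2 - (\sum_(j | P j) q' j * a j) ^+ 2 <=
  K * (\sum_(j | P j) q j * a j ^+ 2 - (\sum_(j | P j) q j * a j) ^+ 2).
Proof.
move=> hq hq' hK hK0.
set mu := \sum_(j | P j) q j * a j.
set mu' := \sum_(j | P j) q' j * a j.
have e1 := var_ident q a q0 mu hq.
have e2 := var_ident q' a q0' mu hq'.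
rewrite -/mu in e1; rewrite -/mu' in e2.
have h2 : \sum_(j | P j) q' j * (a j - mu) ^+ 2 + q0' * mu ^+ 2 <=
   K * (\sum_(j | P j) q j * (a j - mu) ^+ 2 + q0 * mu ^+ 2).
  rewrite mulrDr mulr_sumr; apply: lerD.
    apply: ler_sum => j Pj; rewrite mulrA; apply: ler_wpM2r; [exact: sqr_ge0|exact: hK].
  rewrite mulrA; apply: ler_wpM2r; [exact: sqr_ge0|exact: hK0].
have h3 : 0 <= (mu' - mu) ^+ 2 by exact: sqr_ge0.
rewrite e1 e2 in h2.
set A := \sum_(j | P j) q' j * a j ^+ 2 in h2 *.
set B := \sum_(j | P j) q j * a j ^+ 2 in h2 *.
have -> : B - mu ^+ 2 = B - 2 * mu * mu + mu ^+ 2 by ring.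
apply: le_trans h2.
have : A - mu' ^+ 2 = A - 2 * mu * mu' + mu ^+ 2 - (mu' - mu) ^+ 2 by ring.
move=> ->; lra.
Qed.

Lemma var_ge0 (q a : I -> R) (q0 : R) :
  q0 + \sum_(j | P j) q j = 1 -> 0 <= q0 -> (forall j, P j -> 0 <= q j) ->
  0 <= \sum_(j | P j) q j * a j ^+ 2 - (\sum_(j | P j) q j * a j) ^+ 2.
Proof.
move=> hq h0 hj.
set mu := \sum_(j | P j) q j * a j.
have e1 := var_ident q a q0 mu hq; rewrite -/mu in e1.
have -> : \sum_(j | P j) q j * a j ^+ 2 - mu ^+ 2 =
  \sum_(j | P j) q j * a j ^+ 2 - 2 * mu * mu + mu ^+ 2 by ring.
rewrite -e1; apply: addr_ge0; last by apply: mulr_ge0 => //; exact: sqr_ge0.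
by apply: sumr_ge0 => j Pj; apply: mulr_ge0; [exact: hj|exact: sqr_ge0].
Qed.
End Var.
Section Ratio.
Variables (R : realType) (I : finType) (P : pred I).

Lemma Z_gt0 (e : I -> R) : (forall j, P j -> 0 < e j) -> 0 < 1 + \sum_(j | P j) e j.
Proof.
move=> h; apply: ltr_pwDl => //; apply: sumr_ge0 => j Pj; exact: ltW (h j Pj).
Qed.

Lemma Z_sum (e : I -> R) : (forall j, P j -> 0 < e j) ->
  (1 + \sum_(j | P j) e j)^-1 + \sum_(j | P j) e j / (1 + \sum_(j | P j) e j) = 1.
Proof.
move=> h; have hz := Z_gt0 e h; rewrite -mulr_suml.
set s := \sum_(j | P j) e j in hz *.
field; by rewrite gt_eqF.
Qed.

Lemma ratio_le (ea eb : I -> R) (E : R) : 1 <= E ->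
  (forall j, P j -> 0 < ea j) -> (forall j, P j -> 0 < eb j) ->
  (forall j, P j -> ea j <= E * eb j) -> (forall j, P j -> eb j <= E * ea j) ->
  (forall j, P j -> ea j / (1 + \sum_(j | P j) ea j) <=
                    E ^+ 2 * (eb j / (1 + \sum_(j | P j) eb j))) /\
  (1 + \sum_(j | P j) ea j)^-1 <= E ^+ 2 * (1 + \sum_(j | P j) eb j)^-1.
Proof.
move=> hE ha hb hab hba.
have za := Z_gt0 ea ha; have zb := Z_gt0 eb hb.
have hZ : 1 + \sum_(j | P j) eb j <= E * (1 + \sum_(j | P j) ea j).
  rewrite mulrDr mulr1 mulr_sumr; apply: lerD => //; exact: ler_sum.
set Za := 1 + \sum_(j | P j) ea j in za hZ *.
set Zb := 1 + \sum_(j | P j) eb j in zb hZ *.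
split.
  move=> j Pj; rewrite ler_pdivrMr // mulrA mulrAC ler_pdivlMr //.
  have h1 := hab j Pj; have h2 := hb j Pj; have h3 := ha j Pj.
  have : ea j * Zb <= E * eb j * (E * Za) by apply: ler_pM; lra.
  move=> h; have -> : E ^+ 2 * eb j * Za = E * eb j * (E * Za) by ring.
  exact: h.
rewrite ler_pdivlMr // mulrC ler_pdivrMr //.
have h1 : E * Za <= E ^+ 2 * Za by rewrite expr2; apply: ler_wpM2r; nra.
lra.
Qed.
End Ratio.
Lemma phi_bound (R : realType) (z : R) : 0 <= z -> expR (z / 2) <= 1 + 2 * phi z.
Proof.
move=> hz; rewrite /phi; case: eqP => [->|/eqP nz].
  by rewrite mul0r expR0 mulr0 addr0.
have zp : 0 < z by rewrite lt_neqAle eq_sym nz hz.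
set E := expR (z / 2).
have hE : expR z = E ^+ 2 by rewrite /E expr2 -expRD; congr expR; field.
set h := E - 1 - z / 2.
have hh : 0 <= h by rewrite /h; have := expR_ge1Dx (z / 2); rewrite -/E; lra.
have eE : E = 1 + z / 2 + h by rewrite /h; ring.
rewrite hE.
have -> : 1 + 2 * (((E ^+ 2 - 1) / z - 1) * (1 + z)) =
   (z + 2 * (E ^+ 2 - 1 - z) * (1 + z)) / z by field; rewrite gt_eqF.
rewrite ler_pdivlMr // eE.
nra.
Qed.

Lemma c_bound (R : realType) (M : R) : 0 <= M ->
  expR M ^+ 2 <= 1 + 2 * phi (3 * Num.sqrt 2 * M).
Proof.
move=> hM.
have hs : 4 / 3 <= Num.sqrt 2 :> R.
  have s0 := sqrtr_ge0 (2 : R).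
  have s2 : Num.sqrt (2 : R) ^+ 2 = 2 by rewrite sqr_sqrtr.
  rewrite expr2 in s2; nra.
apply: (le_trans _ (@phi_bound R (3 * Num.sqrt 2 * M) _)); last first.
  apply: mulr_ge0 => //; apply: mulr_ge0 => //; exact: sqrtr_ge0.
rewrite expr2 -expRD ler_expR; nra.
Qed.
Section Form.
Variables (R : realType) (d : nat) (v : 'cV[R]_d).
Definition form (A : 'M[R]_d) : R := (trmx v *m A *m v) 0 0.
Definition av (a : 'cV[R]_d) : R := (trmx v *m a) 0 0.

Lemma formD A B : form (A + B) = form A + form B.
Proof. by rewrite /form mulmxDr mulmxDl !mxE. Qed.
Lemma formB A B : form (A - B) = form A - form B.
Proof. by rewrite /form mulmxBr mulmxBl !mxE. Qed.
Lemma form0 : form 0 = 0.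
Proof. by rewrite /form mulmx0 mul0mx mxE. Qed.
Lemma formZ k A : form (k *: A) = k * form A.
Proof. by rewrite /form -scalemxAr -scalemxAl mxE. Qed.
Lemma form_sum (I : Type) (r : seq I) (P : pred I) (F : I -> 'M[R]_d) :
  form (\sum_(i <- r | P i) F i) = \sum_(i <- r | P i) form (F i).
Proof. exact: (big_morph form formD form0). Qed.
Lemma form_outer a b : form (a *m trmx b) = av a * av b.
Proof.
rewrite /form /av !mulmxA -(mulmxA _ (trmx b)) mxE big_ord1.
congr (_ * _).
by rewrite -[trmx b *m v]trmxK trmx_mul trmxK mxE.
Qed.
End Form.
Arguments form {R d}. Arguments av {R d}.

Definition Var (R : realType) (t N d : nat) (S : 'I_t -> {set 'I_N})
  (x : 'I_t -> 'I_N -> 'cV[R]_d) (v : 'cV[R]_d) (th : 'cV[R]_d) (m : 'I_t) : R :=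
  \sum_(j in S m) mnl_q S x th m j * av v (x m j) ^+ 2
  - (\sum_(j in S m) mnl_q S x th m j * av v (x m j)) ^+ 2.
Arguments Var {R t N d}.

Lemma formH (R : realType) (t N d : nat) (S : 'I_t -> {set 'I_N})
  (x : 'I_t -> 'I_N -> 'cV[R]_d) (v : 'cV[R]_d) (th : 'cV[R]_d) :
  form v (mnl_H S x th) = \sum_(m < t) Var S x v th m.
Proof.
rewrite /mnl_H form_sum; apply: eq_bigr => m _.
rewrite formB !form_sum /Var; congr (_ - _).
  by apply: eq_bigr => j _; rewrite formZ form_outer expr2.
rewrite expr2 mulr_suml; apply: eq_bigr => i _.
rewrite form_sum mulr_sumr; apply: eq_bigr => j _.
rewrite formZ form_outer; ring.
Qed.

Lemma inner_sub (R : realType) (d : nat) (u a b : 'cV[R]_d) :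
  inner u (a - b) = inner u a - inner u b.
Proof. by rewrite /inner mulmxBr !mxE. Qed.

Lemma bigmax_ge0 (R : realType) (I : finType) (P : pred I) (F : I -> R) :
  (forall i, 0 <= F i) -> 0 <= \big[Num.max/0]_(i | P i) F i.
Proof. by move=> hF; elim/big_ind: _ => // a b ha hb; rewrite le_max ha. Qed.

Lemma le_bigmax_R (R : realType) (I : finType) (P : pred I) (F : I -> R) i0 :
  P i0 -> F i0 <= \big[Num.max/0]_(i | P i) F i.
Proof. by move=> h; rewrite (bigD1 i0) //= le_max lexx. Qed.

Lemma var_step (R : realType) (t N d : nat) (S : 'I_t -> {set 'I_N})
  (x : 'I_t -> 'I_N -> 'cV[R]_d) (v : 'cV[R]_d) (ta tb : 'cV[R]_d) (m : 'I_t) (M : R) :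
  0 <= M -> (forall j, j \in S m -> `|inner (x m j) ta - inner (x m j) tb| <= M) ->
  Var S x v ta m <= expR M ^+ 2 * Var S x v tb m.
Proof.
move=> hM hb.
set ea := fun j => expR (inner (x m j) ta).
set eb := fun j => expR (inner (x m j) tb).
have pa : forall j, j \in S m -> 0 < ea j by move=> j _; exact: expR_gt0.
have pb : forall j, j \in S m -> 0 < eb j by move=> j _; exact: expR_gt0.
have E1 : 1 <= expR M by rewrite -expR0 ler_expR.
have hab : forall j, j \in S m -> ea j <= expR M * eb j.
  move=> j hj; rewrite /ea /eb -expRD ler_expR.
  have := hb j hj; rewrite ler_norml; lra.
have hba : forall j, j \in S m -> eb j <= expR M * ea j.
  move=> j hj; rewrite /ea /eb -expRD ler_expR.
  have := hb j hj; rewrite ler_norml; lra.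
have [r1 r2] := ratio_le _ _ _ _ _ _ E1 pa pb hab hba.
rewrite /Var; apply: (var_cmp _ _ (fun j => j \in S m) (mnl_q S x tb m) (mnl_q S x ta m) _
  ((1 + \sum_(j in S m) eb j)^-1) ((1 + \sum_(j in S m) ea j)^-1)).
- exact: (Z_sum _ _ _ _ pb).
- exact: (Z_sum _ _ _ _ pa).
- exact: r1.
- exact: r2.
Qed.

Lemma Var_ge0 (R : realType) (t N d : nat) (S : 'I_t -> {set 'I_N})
  (x : 'I_t -> 'I_N -> 'cV[R]_d) (v : 'cV[R]_d) (ta : 'cV[R]_d) (m : 'I_t) :
  0 <= Var S x v ta m.
Proof.
set ea := fun j => expR (inner (x m j) ta).
have pa : forall j, j \in S m -> 0 < ea j by move=> j _; exact: expR_gt0.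
rewrite /Var; apply: (var_ge0 _ _ (fun j => j \in S m) (mnl_q S x ta m) _ ((1 + \sum_(j in S m) ea j)^-1)).
- exact: (Z_sum _ _ _ _ pa).
- by rewrite invr_ge0 ltW // (Z_gt0 _ _ _ _ pa).
- move=> j hj; rewrite /mnl_q divr_ge0 // ?ltW ?expR_gt0 //.
  exact: (Z_gt0 _ _ _ _ pa).
Qed.

Theorem propositionB1 (R : realType) (t N d : nat)
  (S : 'I_t -> {set 'I_N}) (x : 'I_t -> 'I_N -> 'cV[R]_d)
  (thetas theta : 'cV[R]_d) :
  let c := 1 + 2 * phi (mnl_zeta S x theta thetas) in
  loewner_le (c^-1 *: mnl_H S x thetas) (mnl_H S x theta) /\
  loewner_le (mnl_H S x theta) (c *: mnl_H S x thetas).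
Proof.
move=> c.
set M := \big[Num.max/0]_(m < t) \big[Num.max/0]_(j in S m)
      `|inner (x m j) (theta - thetas)|.
have hM : 0 <= M.
  apply: bigmax_ge0 => m; apply: bigmax_ge0 => j; exact: normr_ge0.
have hb : forall m j, j \in S m -> `|inner (x m j) theta - inner (x m j) thetas| <= M.
  move=> m j hj; rewrite -inner_sub.
  apply: le_trans (le_bigmax_R _ _ _ _ m isT).
  exact: (le_bigmax_R _ _ (fun j => j \in S m) (fun j => `|inner (x m j) (theta - thetas)|) _ hj).
have hb' : forall m j, j \in S m -> `|inner (x m j) thetas - inner (x m j) theta| <= M.
  by move=> m j hj; rewrite distrC; exact: hb.
set K := expR M ^+ 2.
have hKc : K <= c by exact: c_bound.
have hK : 0 < K by rewrite exprn_gt0 // expR_gt0.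
have hc : 0 < c by lra.
split=> v; rewrite -[(trmx v *m _ *m v) 0 0]/(form v _) formB formZ !formH mulr_sumr -sumrB;
  apply: sumr_ge0 => m _.
- have h1 := var_step _ _ _ _ S x v thetas theta m M hM (hb' m).
  have h2 := Var_ge0 _ _ _ _ S x v theta m.
  rewrite subr_ge0 -/K in h1 *.
  rewrite mulrC ler_pdivrMr //.
  apply: le_trans h1 _; rewrite mulrC; by apply: ler_wpM2l.
- have h1 := var_step _ _ _ _ S x v theta thetas m M hM (hb m).
  have h2 := Var_ge0 _ _ _ _ S x v thetas m.
  rewrite subr_ge0 -/K in h1 *.
  apply: le_trans h1 _; by apply: ler_wpM2r.
Qed.
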